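(* Consider the generalized $q$-Toda hierarchy on the Lax operator $\mathcal L=\Lambda_\epsilon+u+e^{v}\Lambda_\epsilon^{-1}$, with flows $\epsilon\partial_{t_j}\mathcal L=[(B_j)_+,\mathcal L]$, $B_j=\mathcal L^j/j!$. Let $H_j=\int h_j\,dx$ with $h_j=\frac{1}{j!}\operatorname{Res}\mathcal L^j$. Then the flows are Hamiltonian with respect to the first Poisson bracket, $$\frac{\partial w}{\partial t_j}=\{w,H_j\}_1,\qquad w\in\{u,v\},\ j\ge 0,$$ and they satisfy the bi-Hamiltonian recursion relation $\{\cdot,H_{n-1}\}_2=n\{\cdot,H_n\}_1$ for $n\ge1$.
   Context: Fix $\epsilon>0$; $\Lambda_\epsilon=e^{\epsilon x^2\partial_x}$ acts by $\Lambda_\epsilon^j g(x)=g\!\left(\frac{x}{1-j\epsilon x}\right)$, $j\in\mathbb{Z}$. Difference operators $A=\sum_k A_k(x)\Lambda_\epsilon^k$ multiply by $(X\Lambda_\epsilon^i)\circ(Y\Lambda_\epsilon^j)=X(x)Y\!\left(\frac{x}{1-i\epsilon x}\right)\Lambda_\epsilon^{i+j}$; $A_+=\sum_{k\ge0}A_k\Lambda_\epsilon^k$ and $\operatorname{Res}A=A_0$. For a local functional $H=\int h\,dx$ and $w\in\{u,v\}$, $\{w,H\}_i=\sum_{w'\in\{u,v\}}P_i^{ww'}\frac{\delta H}{\delta w'}$, where $\frac{\delta H}{\delta w'}$ is the variational derivative and the operators $P_i^{ww'}$ are given by the brackets (with $\delta(x-y)$ the delta function): $\{u(x),u(y)\}_1=\{v(x),v(y)\}_1=0$,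 $\{u(x),v(y)\}_1=\frac1\epsilon[\Lambda_\epsilon-1]\delta(x-y)$, $\{v(x),u(y)\}_1=\frac1\epsilon[1-\Lambda_\epsilon^{-1}]\delta(x-y)$; $\{u(x),u(y)\}_2=\frac1\epsilon[\Lambda_\epsilon e^{v(x)}-e^{v(x)}\Lambda_\epsilon^{-1}]\delta(x-y)$, $\{u(x),v(y)\}_2=\frac1\epsilon u(x)[\Lambda_\epsilon-1]\delta(x-y)$, $\{v(x),u(y)\}_2=\frac1\epsilon[1-\Lambda_\epsilon^{-1}]u(x)\delta(x-y)$, $\{v(x),v(y)\}_2=\frac1\epsilon[\Lambda_\epsilon-\Lambda_\epsilon^{-1}]\delta(x-y)$. *)

(* Defs.v *)
From Stdlib Require Import Reals ZArith List.
Import ListNotations.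
Open Scope R_scope.

(* DU k stands for (Lambda_eps^k u)(x) = u(x/(1-k eps x)),            *)
(* DW k stands for (Lambda_eps^k e^v)(x) = exp(v(x/(1-k eps x))).     *)
Inductive dpoly : Type :=
| DC : R -> dpoly
| DU : Z -> dpoly
| DW : Z -> dpoly
| DAdd : dpoly -> dpoly -> dpoly
| DMul : dpoly -> dpoly -> dpoly.

Fixpoint dshift (n : Z) (p : dpoly) : dpoly :=
  match p with
  | DC c => DC c
  | DU k => DU (k + n)%Z
  | DW k => DW (k + n)%Z
  | DAdd a b => DAdd (dshift n a) (dshift n b)
  | DMul a b => DMul (dshift n a) (dshift n b)
  end.

Fixpoint d_du (k : Z) (p : dpoly) : dpoly :=
  match p with
  | DC _ => DC 0
  | DU j => if Z.eqb j k then DC 1 else DC 0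
  | DW _ => DC 0
  | DAdd a b => DAdd (d_du k a) (d_du k b)
  | DMul a b => DAdd (DMul (d_du k a) b) (DMul a (d_du k b))
  end.

(* partial derivative with respect to v_k = Lambda^k v  (d e^{v_k}/d v_k = e^{v_k}) *)
Fixpoint d_dv (k : Z) (p : dpoly) : dpoly :=
  match p with
  | DC _ => DC 0
  | DU _ => DC 0
  | DW j => if Z.eqb j k then DW j else DC 0
  | DAdd a b => DAdd (d_dv k a) (d_dv k b)
  | DMul a b => DAdd (DMul (d_dv k a) b) (DMul a (d_dv k b))
  end.

Fixpoint dsupp (p : dpoly) : nat :=
  match p with
  | DC _ => 0%nat
  | DU k => Z.to_nat (Z.abs k)
  | DW k => Z.to_nat (Z.abs k)
  | DAdd a b => Nat.max (dsupp a) (dsupp b)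
  | DMul a b => Nat.max (dsupp a) (dsupp b)
  end.

Definition dsum (l : list dpoly) : dpoly := fold_right DAdd (DC 0) l.

Definition zrange (N : nat) : list Z :=
  map (fun i => (Z.of_nat i - Z.of_nat N)%Z) (seq 0 (2 * N + 1)).

Inductive field := Vu | Vv.

Definition var_der (w : field) (h : dpoly) : dpoly :=
  dsum (map (fun k => dshift (- k) (match w with Vu => d_du k h | Vv => d_dv k h end))
            (zrange (dsupp h))).

(* Difference operators  sum_k A_k Lambda^k  as lists of (k, A_k).    *)
Definition dop := list (Z * dpoly).

Definition dop_add (A B : dop) : dop := A ++ B.
Definition dop_scale (c : R) (A : dop) : dop := map (fun a => (fst a, DMul (DC c) (snd a))) A.
Definition dop_sub (A B : dop) : dop := dop_add A (dop_scale (-1) B).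
(* (X Lambda^i) o (Y Lambda^j) = X (Lambda^i Y) Lambda^(i+j) *)
Definition dop_mul (A B : dop) : dop :=
  flat_map (fun a => map (fun b => ((fst a + fst b)%Z, DMul (snd a) (dshift (fst a) (snd b)))) B) A.
Fixpoint dop_pow (A : dop) (n : nat) : dop :=
  match n with O => [(0%Z, DC 1)] | S m => dop_mul A (dop_pow A m) end.
Definition dop_comm (A B : dop) : dop := dop_sub (dop_mul A B) (dop_mul B A).
Definition dop_coef (k : Z) (A : dop) : dpoly :=
  dsum (map snd (filter (fun a => Z.eqb (fst a) k) A)).
Definition dop_res (A : dop) : dpoly := dop_coef 0 A.
Definition dop_plus (A : dop) : dop := filter (fun a => Z.leb 0 (fst a)) A.
Definition dop_apply (P : dop) (f : dpoly) : dpoly :=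
  dsum (map (fun a => DMul (snd a) (dshift (fst a) f)) P).

Definition Lam : dop := [(1%Z, DC 1)].
Definition Laminv : dop := [((-1)%Z, DC 1)].
Definition Id : dop := [(0%Z, DC 1)].
Definition Mult (f : dpoly) : dop := [(0%Z, f)].

Definition Lax : dop := dop_add Lam (dop_add (Mult (DU 0)) (dop_mul (Mult (DW 0)) Laminv)).

Definition Bop (j : nat) : dop := dop_scale (/ INR (fact j)) (dop_pow Lax j).

(* eps * d L / d t_j = [(B_j)_+, L] *)
Definition lax_rhs (j : nat) : dop := dop_comm (dop_plus (Bop j)) Lax.

Definition hdens (j : nat) : dpoly :=
  DMul (DC (/ INR (fact (S j)))) (dop_res (dop_pow Lax (S j))).

Definition P1 (eps : R) (w w' : field) : dop :=
  match w, w' with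
  | Vu, Vu => []
  | Vv, Vv => []
  | Vu, Vv => dop_scale (/ eps) (dop_sub Lam Id)
  | Vv, Vu => dop_scale (/ eps) (dop_sub Id Laminv)
  end.

Definition P2 (eps : R) (w w' : field) : dop :=
  match w, w' with
  | Vu, Vu => dop_scale (/ eps) (dop_sub (dop_mul Lam (Mult (DW 0))) (dop_mul (Mult (DW 0)) Laminv))
  | Vu, Vv => dop_scale (/ eps) (dop_mul (Mult (DU 0)) (dop_sub Lam Id))
  | Vv, Vu => dop_scale (/ eps) (dop_mul (dop_sub Id Laminv) (Mult (DU 0)))
  | Vv, Vv => dop_scale (/ eps) (dop_sub Lam Laminv)
  end.

Definition ham (P : field -> field -> dop) (w : field) (h : dpoly) : dpoly :=
  DAdd (dop_apply (P w Vu) (var_der Vu h)) (dop_apply (P w Vv) (var_der Vv h)).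

Definition lam_pt (eps : R) (k : Z) (x : R) : R := x / (1 - IZR k * eps * x).

Fixpoint deval (eps : R) (u v : R -> R) (x : R) (p : dpoly) : R :=
  match p with
  | DC c => c
  | DU k => u (lam_pt eps k x)
  | DW k => exp (v (lam_pt eps k x))
  | DAdd a b => deval eps u v x a + deval eps u v x b
  | DMul a b => deval eps u v x a * deval eps u v x b
  end.

(* Main.v *)
Require Import Defs.
From Stdlib Require Import Reals ZArith List Lia Lra FunctionalExtensionality.
From Coquelicot Require Import Coquelicot.
Import ListNotations.
Open Scope R_scope.


Lemma dR_plus (f g : R -> R) x df dg : is_derive f x df -> is_derive g x dg ->
  is_derive (fun t => f t + g t) x (df + dg).
Proof. intros H1 H2. exact (is_derive_plus f g x df dg H1 H2). Qed.
Lemma dR_mult (f g : R -> R) x df dg : is_derive f x df -> is_derive g x dg ->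
  is_derive (fun t => f t * g t) x (df * g x + f x * dg).
Proof. intros H1 H2. exact (is_derive_mult f g x df dg H1 H2 Rmult_comm). Qed.
Lemma dR_const (c x : R) : is_derive (fun _ => c) x 0.
Proof. exact (is_derive_const c x). Qed.
Lemma dR_id (x : R) : is_derive (fun t => t) x 1.
Proof. exact (is_derive_id x). Qed.
Lemma dR_ext (f g : R -> R) x (l1 l2 : R) : (forall t, f t = g t) -> l1 = l2 -> is_derive f x l1 -> is_derive g x l2.
Proof. intros H <- H1. exact (is_derive_ext f g x l1 H H1). Qed.

Fixpoint E (a b : Z -> R) (p : dpoly) : R :=
  match p with
  | DC c => c
  | DU k => a k
  | DW k => b k
  | DAdd p q => E a b p + E a b q
  | DMul p q => E a b p * E a b q
  end.
Definition sh (s : Z) (f : Z -> R) : Z -> R := fun k => f (k + s)%Z.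
Definition upd (f : Z -> R) (k : Z) (t : R) : Z -> R := fun j => if Z.eqb j k then t else f j.

Lemma E_shift a b n p : E a b (dshift n p) = E (sh n a) (sh n b) p.
Proof. induction p; simpl; try reflexivity; rewrite IHp1, IHp2; reflexivity. Qed.

Lemma sh0 f : sh 0 f = f.
Proof. apply functional_extensionality; intro k; unfold sh; rewrite Z.add_0_r; auto. Qed.
Lemma sh_sh s t f : sh s (sh t f) = sh (t + s) f.
Proof. apply functional_extensionality; intro k; unfold sh; f_equal; lia. Qed.

Definition lsum {A} (f : A -> R) (l : list A) : R := fold_right (fun x acc => f x + acc) 0 l.
Lemma lsum_app {A} (f : A -> R) l1 l2 : lsum f (l1 ++ l2) = lsum f l1 + lsum f l2.
Proof. induction l1; simpl; [ring| rewrite IHl1; ring]. Qed.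
Lemma lsum_map {A B} (f : B -> R) (g : A -> B) l : lsum f (map g l) = lsum (fun x => f (g x)) l.
Proof. induction l; simpl; auto. rewrite IHl; auto. Qed.
Lemma lsum_plus {A} (f g : A -> R) l : lsum (fun x => f x + g x) l = lsum f l + lsum g l.
Proof. induction l; simpl; [ring| rewrite IHl; ring]. Qed.
Lemma lsum_scal {A} (c : R) (f : A -> R) l : lsum (fun x => c * f x) l = c * lsum f l.
Proof. induction l; simpl; [ring| rewrite IHl; ring]. Qed.
Lemma lsum_ext {A} (f g : A -> R) l : (forall x, f x = g x) -> lsum f l = lsum g l.
Proof. intro H; induction l; simpl; auto. rewrite IHl, H; auto. Qed.

Lemma E_dsum a b l : E a b (dsum l) = lsum (E a b) l.
Proof. induction l; simpl; auto. rewrite IHl; auto. Qed.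

Definition mat (a b : Z -> R) (A : dop) (i j : Z) : R :=
  E (sh i a) (sh i b) (dop_coef (j - i) A).

Lemma mat_nil a b i j : mat a b [] i j = 0.
Proof. reflexivity. Qed.
Lemma mat_cons a b x A i j : mat a b (x :: A) i j =
  (if Z.eqb (fst x) (j - i) then E (sh i a) (sh i b) (snd x) else 0) + mat a b A i j.
Proof. unfold mat, dop_coef. simpl. destruct (Z.eqb (fst x) (j - i)); simpl; ring. Qed.
Lemma mat_app a b A B i j : mat a b (A ++ B) i j = mat a b A i j + mat a b B i j.
Proof. induction A; simpl. rewrite mat_nil; ring. rewrite !mat_cons, IHA; ring. Qed.
Lemma mat_scale a b c A i j : mat a b (dop_scale c A) i j = c * mat a b A i j.
Proof. induction A; simpl. rewrite !mat_nil; ring. unfold dop_scale in *. simpl. rewrite !mat_cons, IHA.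
 simpl. destruct (Z.eqb (fst a0) (j - i)); simpl; ring. Qed.
Lemma mat_sub a b A B i j : mat a b (dop_sub A B) i j = mat a b A i j - mat a b B i j.
Proof. unfold dop_sub, dop_add. rewrite mat_app, mat_scale. ring. Qed.
Lemma mat_plus a b A i j : mat a b (dop_plus A) i j = if Z.leb 0 (j - i) then mat a b A i j else 0.
Proof. induction A; simpl. destruct (Z.leb 0 (j-i)); auto.
 unfold dop_plus in *. simpl. destruct (Z.leb 0 (fst a0)) eqn:E1.
 - rewrite !mat_cons, IHA. destruct (Z.eqb_spec (fst a0) (j - i)).
   + rewrite <- e, E1. ring.
   + destruct (Z.leb 0 (j - i)); ring.
 - rewrite mat_cons, IHA. destruct (Z.eqb_spec (fst a0) (j - i)).
   + rewrite <- e, E1. ring.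
   + destruct (Z.leb 0 (j - i)); ring.
Qed.

Lemma mat_mul a b A B i j : mat a b (dop_mul A B) i j =
  lsum (fun x => E (sh i a) (sh i b) (snd x) * mat a b B (i + fst x) j) A.
Proof.
  induction A as [|x A IH]; simpl. reflexivity.
  unfold dop_mul in *. simpl. rewrite mat_app, IH. f_equal.
  clear IH. induction B as [|y B IHB]; simpl. rewrite !mat_nil; ring.
  rewrite !mat_cons, IHB. simpl. rewrite E_shift, !sh_sh.
  destruct (Z.eqb_spec (fst x + fst y) (j - i)); destruct (Z.eqb_spec (fst y) (j - (i + fst x))); try lia; ring.
Qed.


Lemma Lax_eq : Lax = [(1%Z, DC 1); (0%Z, DU 0); ((-1)%Z, DMul (DW 0) (DC 1))].
Proof. reflexivity. Qed.

Lemma mat_Lax a b m j : mat a b Lax m j =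
  (if Z.eqb j (m+1)%Z then 1 else 0) + (if Z.eqb j m then a m else 0) + (if Z.eqb j (m-1)%Z then b m else 0).
Proof.
  rewrite Lax_eq, !mat_cons, mat_nil. cbn [fst snd E]. unfold sh. rewrite !Z.add_0_l.
  destruct (Z.eqb_spec 1 (j - m)); destruct (Z.eqb_spec j (m+1)); try lia;
  destruct (Z.eqb_spec 0 (j - m)); destruct (Z.eqb_spec j m); try lia;
  destruct (Z.eqb_spec (-1) (j - m)); destruct (Z.eqb_spec j (m-1)); try lia; ring.
Qed.

Lemma mat_mul_Lax_r a b A i j : mat a b (dop_mul A Lax) i j =
  mat a b A i (j-1)%Z + a j * mat a b A i j + b (j+1)%Z * mat a b A i (j+1)%Z.
Proof.
  rewrite mat_mul. induction A as [|x A IH]; simpl. rewrite !mat_nil; ring.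
  rewrite IH, !mat_cons, mat_Lax. clear IH.
  destruct (Z.eqb_spec j (i + fst x + 1)); destruct (Z.eqb_spec (fst x) (j - 1 - i)); try lia;
  destruct (Z.eqb_spec j (i + fst x)); destruct (Z.eqb_spec (fst x) (j - i)); try lia;
  destruct (Z.eqb_spec j (i + fst x - 1)); destruct (Z.eqb_spec (fst x) (j + 1 - i)); try lia;
  try (subst j; replace (i + fst x - 1 + 1)%Z with (i + fst x)%Z by lia); try subst j; ring.
Qed.

Lemma mat_mul_Lax_l a b A i j : mat a b (dop_mul Lax A) i j =
  mat a b A (i+1)%Z j + a i * mat a b A i j + b i * mat a b A (i-1)%Z j.
Proof.
  rewrite mat_mul, Lax_eq. simpl. unfold sh; simpl.
  replace (i + 0)%Z with i by lia. replace (i + -1)%Z with (i - 1)%Z by lia. ring.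
Qed.

Definition T a b n i j := mat a b (dop_pow Lax n) i j.

Lemma T_0 a b i j : T a b 0 i j = if Z.eqb i j then 1 else 0.
Proof. unfold T, mat. simpl. destruct (Z.eqb_spec i j).
  - subst. rewrite Z.sub_diag. simpl. ring.
  - destruct (j - i)%Z eqn:E0; [lia| simpl; ring | simpl; ring]. Qed.
Lemma T_S a b n i j : T a b (S n) i j = T a b n (i+1)%Z j + a i * T a b n i j + b i * T a b n (i-1)%Z j.
Proof. unfold T. simpl dop_pow. apply mat_mul_Lax_l. Qed.

Lemma T_S_r a b n i j : T a b (S n) i j = T a b n i (j-1)%Z + a j * T a b n i j + b (j+1)%Z * T a b n i (j+1)%Z.
Proof.
  revert i j. induction n; intros i j.
  - rewrite T_S, !T_0.
    destruct (Z.eqb_spec (i+1) j); destruct (Z.eqb_spec i (j-1)); try lia;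
    destruct (Z.eqb_spec i j); try lia;
    destruct (Z.eqb_spec (i-1) j); destruct (Z.eqb_spec i (j+1)); try lia;
    try subst j; try rewrite Z.sub_add; ring.
  - rewrite (T_S _ _ (S n) i j), (IHn (i+1)%Z j), (IHn (i-1)%Z j), (T_S _ _ n i (j-1)%Z), (T_S _ _ n i (j+1)%Z).
    rewrite (IHn i j) at 1. rewrite (T_S _ _ n i j). ring.
Qed.


Lemma zr_0 (f : Z -> R) : lsum f (zrange 0) = f 0%Z.
Proof. simpl. ring. Qed.

Lemma zrange_S M : zrange (S M) =
  ((- Z.of_nat (S M))%Z :: zrange M) ++ [Z.of_nat (S M)].
Proof.
  unfold zrange.
  replace (2 * S M + 1)%nat with (S ((2 * M + 1) + 1)) by lia.
  change (seq 0 (S (2 * M + 1 + 1))) with (0%nat :: seq 1 (2 * M + 1 + 1)).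
  rewrite seq_app. cbn [map]. rewrite map_app. cbn [app].
  f_equal. f_equal.
  - rewrite <- seq_shift, map_map. apply map_ext. intro y. lia.
  - cbn [seq map]. f_equal. lia.
Qed.

Lemma zr_S (f : Z -> R) M : lsum f (zrange (S M)) =
  f (- Z.of_nat (S M))%Z + lsum f (zrange M) + f (Z.of_nat (S M)).
Proof. rewrite zrange_S, lsum_app. simpl. ring. Qed.

Lemma zr_neg (f : Z -> R) M : lsum (fun k => f (- k)%Z) (zrange M) = lsum f (zrange M).
Proof.
  induction M. rewrite !zr_0. reflexivity.
  rewrite !zr_S, IHM, Z.opp_involutive. ring.
Qed.

Lemma zr_extend (f : Z -> R) N M : (forall k, (Z.of_nat N < Z.abs k)%Z -> f k = 0) -> (N <= M)%nat ->
  lsum f (zrange N) = lsum f (zrange M).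
Proof.
  intros H HNM. induction M.
  - replace N with 0%nat by lia. reflexivity.
  - destruct (Nat.eq_dec N (S M)). subst. reflexivity.
    rewrite zr_S, <- IHM by lia. rewrite !H by lia. ring.
Qed.

Lemma zr_delta (g : Z -> R) r M :
  lsum (fun k => (if Z.eqb r k then 1 else 0) * g k) (zrange M) =
  if Z.leb (Z.abs r) (Z.of_nat M) then g r else 0.
Proof.
  induction M.
  - rewrite zr_0. destruct (Z.eqb_spec r 0); destruct (Z.leb_spec (Z.abs r) (Z.of_nat 0)); try lia.
    subst; ring. ring.
  - rewrite zr_S, IHM.
    destruct (Z.eqb_spec r (- Z.of_nat (S M))); destruct (Z.eqb_spec r (Z.of_nat (S M)));
    destruct (Z.leb_spec (Z.abs r) (Z.of_nat M)); destruct (Z.leb_spec (Z.abs r) (Z.of_nat (S M))); try lia;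
    try (subst r; ring); ring.
Qed.

Lemma T_prod a b q p r s M : (Z.abs r + Z.of_nat q <= Z.of_nat M)%Z ->
  lsum (fun k => T a b q r k * T a b p k s) (zrange M) = T a b (q + p) r s.
Proof.
  revert r. induction q; intros r Hr.
  - rewrite (lsum_ext _ (fun k => (if Z.eqb r k then 1 else 0) * T a b p k s)).
    + rewrite zr_delta. destruct (Z.leb_spec (Z.abs r) (Z.of_nat M)); try lia. reflexivity.
    + intro k. rewrite T_0. reflexivity.
  - rewrite (lsum_ext _ (fun k => T a b q (r+1)%Z k * T a b p k s + (a r * (T a b q r k * T a b p k s)
        + b r * (T a b q (r-1)%Z k * T a b p k s)))).
    + rewrite !lsum_plus, !lsum_scal, !IHq by lia. change (S q + p)%nat with (S (q + p)). rewrite T_S. ring.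
    + intro k. rewrite T_S. ring.
Qed.

Fixpoint natsum (n : nat) (f : nat -> R) : R :=
  match n with O => 0 | S m => natsum m f + f m end.

Lemma natsum_S n f : natsum (S n) f = natsum n f + f n.
Proof. reflexivity. Qed.
Lemma natsum_ext_lt n f g : (forall q, (q < n)%nat -> f q = g q) -> natsum n f = natsum n g.
Proof. induction n; intro H; simpl; auto. rewrite IHn. rewrite H. auto. lia. intros; apply H; lia. Qed.
Lemma natsum_plus n f g : natsum n (fun q => f q + g q) = natsum n f + natsum n g.
Proof. induction n; simpl; [ring| rewrite IHn; ring]. Qed.
Lemma natsum_scal n c f : natsum n (fun q => c * f q) = c * natsum n f.
Proof. induction n; simpl; [ring| rewrite IHn; ring]. Qed.
Lemma natsum_const n c : natsum n (fun _ => c) = INR n * c.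
Proof. induction n; simpl natsum; [simpl; ring| rewrite IHn, S_INR; ring]. Qed.
Lemma lsum_natsum {A} (F : nat -> A -> R) m l :
  lsum (fun k => natsum m (fun q => F q k)) l = natsum m (fun q => lsum (F q) l).
Proof.
  induction l; simpl. induction m; simpl; auto. rewrite <- IHm; ring.
  rewrite IHl, <- natsum_plus. reflexivity.
Qed.

Definition Du a b m i j := natsum m (fun q => T a b q 0 j * T a b (m - 1 - q) i 0).
Definition Dv a b m i j := natsum m (fun q => T a b q (-1) j * T a b (m - 1 - q) i 0).

Lemma sum_Du a b m M : (m <= M)%nat ->
  lsum (fun k => Du a b m (-k)%Z (-k)%Z) (zrange M) = INR m * T a b (m - 1) 0 0.
Proof.
  intro HM. rewrite (zr_neg (fun k => Du a b m k k)). unfold Du.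
  rewrite (lsum_natsum (fun q k => T a b q 0 k * T a b (m - 1 - q) k 0)).
  rewrite <- natsum_const. apply natsum_ext_lt. intros q Hq.
  rewrite T_prod by lia. f_equal. lia.
Qed.

Lemma sum_Dv a b m M : (m <= M)%nat ->
  lsum (fun k => Dv a b m (-k)%Z (-k)%Z) (zrange M) = INR m * T a b (m - 1) (-1) 0.
Proof.
  intro HM. rewrite (zr_neg (fun k => Dv a b m k k)). unfold Dv.
  rewrite (lsum_natsum (fun q k => T a b q (-1) k * T a b (m - 1 - q) k 0)).
  rewrite <- natsum_const. apply natsum_ext_lt. intros q Hq.
  rewrite T_prod by lia. f_equal. lia.
Qed.

Lemma Du_S a b m i j : Du a b (S m) i j = Du a b m (i+1)%Z j + a i * Du a b m i j + b i * Du a b m (i-1)%Z j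
  + (if Z.eqb i 0 then T a b m 0 j else 0).
Proof.
  unfold Du. rewrite natsum_S. replace (S m - 1 - m)%nat with 0%nat by lia. rewrite T_0.
  rewrite (natsum_ext_lt m _ (fun q => T a b q 0 j * T a b (m - 1 - q) (i+1)%Z 0 +
     (a i * (T a b q 0 j * T a b (m - 1 - q) i 0) + b i * (T a b q 0 j * T a b (m - 1 - q) (i-1)%Z 0)))).
  - rewrite natsum_plus. rewrite natsum_plus. rewrite natsum_scal. rewrite natsum_scal. destruct (Z.eqb i 0); ring.
  - intros q Hq. replace (S m - 1 - q)%nat with (S (m - 1 - q)) by lia. rewrite T_S. ring.
Qed.

Lemma Dv_S a b m i j : Dv a b (S m) i j = Dv a b m (i+1)%Z j + a i * Dv a b m i j + b i * Dv a b m (i-1)%Z j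
  + (if Z.eqb i 0 then T a b m (-1) j else 0).
Proof.
  unfold Dv. rewrite natsum_S. replace (S m - 1 - m)%nat with 0%nat by lia. rewrite T_0.
  rewrite (natsum_ext_lt m _ (fun q => T a b q (-1) j * T a b (m - 1 - q) (i+1)%Z 0 +
     (a i * (T a b q (-1) j * T a b (m - 1 - q) i 0) + b i * (T a b q (-1) j * T a b (m - 1 - q) (i-1)%Z 0)))).
  - rewrite natsum_plus. rewrite natsum_plus. rewrite natsum_scal. rewrite natsum_scal. destruct (Z.eqb i 0); ring.
  - intros q Hq. replace (S m - 1 - q)%nat with (S (m - 1 - q)) by lia. rewrite T_S. ring.
Qed.

Lemma T_sym a b (g : Z -> R) : (forall j, g (j+1)%Z = b (j+1)%Z * g j) ->
  forall n i j, T a b n j i * g i = T a b n i j * g j.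
Proof.
  intros Hg n. induction n; intros i j.
  - rewrite !T_0. destruct (Z.eqb_spec j i); destruct (Z.eqb_spec i j); try lia; try subst; ring.
  - rewrite T_S, T_S_r.
    transitivity (T a b n (j+1)%Z i * g i + a j * (T a b n j i * g i) + b j * (T a b n (j-1)%Z i * g i)). ring.
    rewrite (IHn i (j+1)%Z), (IHn i j), (IHn i (j-1)%Z), (Hg j). specialize (Hg (j-1)%Z). rewrite Z.sub_add in Hg. rewrite Hg. ring.
Qed.


Lemma Ed_u a b k p t0 : is_derive (fun t => E (upd a k t) b p) t0 (E (upd a k t0) b (d_du k p)).
Proof.
  induction p; simpl.
  - apply dR_const.
  - unfold upd. destruct (Z.eqb z k); simpl; [apply dR_id | apply dR_const].
  - apply dR_const.
  - apply dR_plus; auto.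
  - apply dR_mult; auto.
Qed.

Lemma Ed_v a b k p t0 : t0 <> 0 -> is_derive (fun t => E a (upd b k t) p) t0 (E a (upd b k t0) (d_dv k p) / t0).
Proof.
  intro H0. induction p; simpl.
  - eapply dR_ext; [| | apply dR_const]; intros; simpl; auto. field; auto.
  - eapply dR_ext; [| | apply dR_const]; intros; simpl; auto. field; auto.
  - destruct (Z.eqb_spec z k).
    + subst. eapply dR_ext; [| | apply dR_id].
      * intro t; unfold upd; rewrite Z.eqb_refl; reflexivity.
      * simpl; unfold upd; rewrite Z.eqb_refl; field; auto.
    + eapply dR_ext; [| | apply dR_const].
      * intro t; unfold upd. destruct (Z.eqb_spec z k); [contradiction| reflexivity].
      * simpl; field; auto.
  - eapply dR_ext; [| | exact (dR_plus _ _ _ _ _ IHp1 IHp2)]; intros; simpl; auto. field; auto.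
  - eapply dR_ext; [| | exact (dR_mult _ _ _ _ _ IHp1 IHp2)]; intros; simpl; auto. field; auto.
Qed.

Lemma d_du_out a b k p : (Z.of_nat (dsupp p) < Z.abs k)%Z -> E a b (d_du k p) = 0.
Proof.
  induction p; simpl; intro H; auto.
  - destruct (Z.eqb_spec z k); simpl; auto. subst. lia.
  - rewrite IHp1, IHp2 by lia. ring.
  - rewrite IHp1, IHp2 by lia. ring.
Qed.
Lemma d_dv_out a b k p : (Z.of_nat (dsupp p) < Z.abs k)%Z -> E a b (d_dv k p) = 0.
Proof.
  induction p; simpl; intro H; auto.
  - destruct (Z.eqb_spec z k); simpl; auto. subst. lia.
  - rewrite IHp1, IHp2 by lia. ring.
  - rewrite IHp1, IHp2 by lia. ring.
Qed.

Lemma upd_T a i t : (fun j => if Z.eqb j i then t else a j) = upd a i t.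
Proof. reflexivity. Qed.

Lemma upd_deriv f i t0 : is_derive (fun t => upd f 0 t i) t0 (if Z.eqb i 0 then 1 else 0).
Proof. unfold upd. destruct (Z.eqb i 0); [apply dR_id|apply dR_const]. Qed.

Lemma T_deriv_u a b m i j t0 :
  is_derive (fun t => T (upd a 0 t) b m i j) t0 (Du (upd a 0 t0) b m i j).
Proof.
  revert i j. induction m; intros i j.
  - eapply dR_ext; [intro t; symmetry; apply T_0 | | apply dR_const]. reflexivity.
  - eapply dR_ext; [intro t; symmetry; apply T_S | |].
    2:{ apply dR_plus; [apply dR_plus|].
        - apply IHm.
        - apply dR_mult; [apply upd_deriv| apply IHm].
        - apply dR_mult; [apply dR_const| apply IHm]. }
    rewrite Du_S. destruct (Z.eqb_spec i 0).
    + subst. replace (upd a 0 t0 0) with t0 by (unfold upd; reflexivity). simpl. ring.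
    + replace (upd a 0 t0 i) with (a i) by (unfold upd; destruct (Z.eqb_spec i 0); [contradiction|reflexivity]). ring.
Qed.

Lemma T_deriv_v a b m i j t0 :
  is_derive (fun t => T a (upd b 0 t) m i j) t0 (Dv a (upd b 0 t0) m i j).
Proof.
  revert i j. induction m; intros i j.
  - eapply dR_ext; [intro t; symmetry; apply T_0 | | apply dR_const]. reflexivity.
  - eapply dR_ext; [intro t; symmetry; apply T_S | |].
    2:{ apply dR_plus; [apply dR_plus|].
        - apply IHm.
        - apply dR_mult; [apply dR_const| apply IHm].
        - apply dR_mult; [apply upd_deriv| apply IHm]. }
    rewrite Dv_S. destruct (Z.eqb_spec i 0).
    + subst. replace (upd b 0 t0 0) with t0 by (unfold upd; reflexivity). simpl. ring.
    + replace (upd b 0 t0 i) with (b i) by (unfold upd; destruct (Z.eqb_spec i 0); [contradiction|reflexivity]). ring.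
Qed.


Lemma sh_upd a k t : sh (-k) (upd a 0 t) = upd (sh (-k) a) k t.
Proof. apply functional_extensionality; intro j; unfold upd, sh.
  destruct (Z.eqb_spec (j + - k) 0); destruct (Z.eqb_spec j k); auto; lia. Qed.
Lemma upd_id a k : upd a k (a k) = a.
Proof. apply functional_extensionality; intro j; unfold upd. destruct (Z.eqb_spec j k); subst; auto. Qed.
Lemma upd_sh_id a k : upd (sh (-k) a) k (a 0%Z) = sh (-k) a.
Proof. apply functional_extensionality; intro j; unfold upd, sh.
  destruct (Z.eqb_spec j k); auto. subst. f_equal. lia. Qed.

Lemma fact_lemma n x : / INR (fact (S n)) * (INR (S n) * x) = x / INR (fact n).
Proof.
  rewrite fact_simpl, mult_INR. pose proof (INR_fact_neq_0 n).
  assert (INR (S n) <> 0) by (rewrite S_INR; pose proof (pos_INR n); lra).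
  field; auto.
Qed.

Lemma VarU0 a b n : E a b (var_der Vu (hdens n)) = T a b n 0 0 / INR (fact n).
Proof.
  unfold var_der. set (h := hdens n). rewrite E_dsum, lsum_map.
  set (c := / INR (fact (S n))).
  assert (Hk : forall k, E a b (dshift (-k) (d_du k h)) = c * Du a b (S n) (-k) (-k)).
  { intro k. rewrite E_shift.
    assert (H1 := Ed_u (sh (-k) a) (sh (-k) b) k h (a 0%Z)).
    rewrite upd_sh_id in H1.
    assert (H2 : is_derive (fun t => E (upd (sh (-k) a) k t) (sh (-k) b) h) (a 0%Z) (c * Du a b (S n) (-k) (-k))).
    { eapply dR_ext; [| | apply is_derive_scal; apply (T_deriv_u a b (S n) (-k) (-k) (a 0%Z))].
      - intro t. unfold h, hdens. cbn [E]. unfold T, mat. rewrite Z.sub_diag, sh_upd. reflexivity.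
      - rewrite upd_id. reflexivity. }
    apply is_derive_unique in H1. apply is_derive_unique in H2. rewrite <- H1, H2. reflexivity. }
  rewrite (lsum_ext _ (fun k => c * Du a b (S n) (-k) (-k))) by (intro k; exact (Hk k)).
  rewrite (zr_extend _ (dsupp h) (Nat.max (dsupp h) (S n))).
  2:{ intros k Hk'. rewrite <- Hk, E_shift. apply d_du_out. lia. }
  2: lia.
  rewrite lsum_scal, sum_Du by lia. unfold c. replace (S n - 1)%nat with n by lia.
  apply fact_lemma.
Qed.

Lemma VarV0 a b n : b 0%Z <> 0 -> E a b (var_der Vv (hdens n)) = b 0%Z * T a b n (-1) 0 / INR (fact n).
Proof.
  intro hb.
  unfold var_der. set (h := hdens n). rewrite E_dsum, lsum_map.
  set (c := / INR (fact (S n))).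
  assert (Hk : forall k, E a b (dshift (-k) (d_dv k h)) = b 0%Z * (c * Dv a b (S n) (-k) (-k))).
  { intro k. rewrite E_shift.
    assert (H1 := Ed_v (sh (-k) a) (sh (-k) b) k h (b 0%Z) hb).
    rewrite upd_sh_id in H1.
    assert (H2 : is_derive (fun t => E (sh (-k) a) (upd (sh (-k) b) k t) h) (b 0%Z) (c * Dv a b (S n) (-k) (-k))).
    { eapply dR_ext; [| | apply is_derive_scal; apply (T_deriv_v a b (S n) (-k) (-k) (b 0%Z))].
      - intro t. unfold h, hdens. cbn [E]. unfold T, mat. rewrite Z.sub_diag, sh_upd. reflexivity.
      - rewrite upd_id. reflexivity. }
    apply is_derive_unique in H1. apply is_derive_unique in H2. rewrite H2 in H1.
    rewrite H1. field. auto. }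
  rewrite (lsum_ext _ (fun k => b 0%Z * (c * Dv a b (S n) (-k) (-k)))) by (intro k; exact (Hk k)).
  rewrite (zr_extend _ (dsupp h) (Nat.max (dsupp h) (S n))).
  2:{ intros k Hk'. rewrite <- Hk, E_shift. apply d_dv_out. lia. }
  2: lia.
  rewrite !lsum_scal, sum_Dv by lia. unfold c. replace (S n - 1)%nat with n by lia.
  rewrite fact_lemma. unfold Rdiv. ring.
Qed.

Lemma T_sh a b s n i j : T (sh s a) (sh s b) n i j = T a b n (i + s)%Z (j + s)%Z.
Proof. unfold T, mat. rewrite !sh_sh. replace (j + s - (i + s))%Z with (j - i)%Z by lia.
  rewrite (Z.add_comm s i). reflexivity. Qed.

Lemma VarU a b n s : E (sh s a) (sh s b) (var_der Vu (hdens n)) = T a b n s s / INR (fact n).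
Proof. rewrite VarU0, T_sh. reflexivity. Qed.

Lemma VarV a b n s : b s <> 0 ->
  E (sh s a) (sh s b) (var_der Vv (hdens n)) = b s * T a b n (s - 1)%Z s / INR (fact n).
Proof. intro hb. rewrite VarV0, T_sh. unfold sh. rewrite !Z.add_0_l. replace (-1 + s)%Z with (s - 1)%Z by lia. reflexivity. unfold sh. rewrite Z.add_0_l. exact hb. Qed.


Lemma deval_E eps u v x p : deval eps u v x p =
  E (fun k => u (lam_pt eps k x)) (fun k => exp (v (lam_pt eps k x))) p.
Proof. induction p; simpl; auto; rewrite IHp1, IHp2; auto. Qed.

Lemma E_coef a b k A : E a b (dop_coef k A) = mat a b A 0 k.
Proof. unfold mat. rewrite !sh0, Z.sub_0_r. reflexivity. Qed.

Lemma mat_Aplus a b j i k : mat a b (dop_plus (Bop j)) i k =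
  if Z.leb i k then / INR (fact j) * T a b j i k else 0.
Proof. rewrite mat_plus. unfold Bop. rewrite mat_scale.
  destruct (Z.leb_spec 0 (k - i)); destruct (Z.leb_spec i k); try lia; reflexivity. Qed.

Ltac zsimpl := repeat match goal with
 | |- context [(?x + ?y)%Z] => progress (let r := eval vm_compute in (x + y)%Z in change (x + y)%Z with r)
 | |- context [(?x - ?y)%Z] => progress (let r := eval vm_compute in (x - y)%Z in change (x - y)%Z with r)
 end.

Ltac hamcomp := unfold ham, P1, P2, dop_apply;
  cbn [dop_scale dop_sub dop_add dop_mul flat_map Lam Id Laminv Mult map app dsum fold_right fst snd E dshift];
  rewrite ?E_shift.

Lemma part1a a b j eps : eps <> 0 -> (forall k, b k <> 0) ->
  E a b (dop_coef 0 (lax_rhs j)) / eps = E a b (ham (P1 eps) Vu (hdens j)).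
Proof.
  intros heps hb.
  rewrite E_coef. unfold lax_rhs, dop_comm. rewrite mat_sub, mat_mul_Lax_r, mat_mul_Lax_l, !mat_Aplus.
  repeat match goal with |- context [Z.leb ?x ?y] => destruct (Z.leb_spec x y); try lia end.
  hamcomp. rewrite !VarV by auto. zsimpl.
  pose proof (INR_fact_neq_0 j). field. auto.
Qed.

Lemma part1b a b j eps : eps <> 0 -> (forall k, b k <> 0) ->
  E a b (dop_coef (-1) (lax_rhs j)) / (eps * b 0%Z) = E a b (ham (P1 eps) Vv (hdens j)).
Proof.
  intros heps hb.
  rewrite E_coef. unfold lax_rhs, dop_comm. rewrite mat_sub, mat_mul_Lax_r, mat_mul_Lax_l, !mat_Aplus.
  repeat match goal with |- context [Z.leb ?x ?y] => destruct (Z.leb_spec x y); try lia end.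
  hamcomp. rewrite !VarU by auto. zsimpl.
  pose proof (INR_fact_neq_0 j). pose proof (hb 0%Z). field. auto.
Qed.

Fixpoint gp (b : Z -> R) (n : nat) : R := match n with O => 1 | S m => b (Z.of_nat (S m)) * gp b m end.
Fixpoint gn (b : Z -> R) (n : nat) : R := match n with O => 1 | S m => gn b m / b (- Z.of_nat m)%Z end.
Definition gg (b : Z -> R) (z : Z) : R := if Z.leb 0 z then gp b (Z.to_nat z) else gn b (Z.to_nat (- z)).

Lemma gp_pos b (hbpos : forall k, 0 < b k) n : 0 < gp b n.
Proof. induction n; simpl; [lra| apply Rmult_lt_0_compat; auto]. Qed.
Lemma gn_pos b (hbpos : forall k, 0 < b k) n : 0 < gn b n.
Proof. induction n; simpl; [lra| unfold Rdiv; apply Rmult_lt_0_compat; auto; apply Rinv_0_lt_compat; auto]. Qed.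
Lemma gg_nz b (hbpos : forall k, 0 < b k) z : gg b z <> 0.
Proof. unfold gg. destruct (Z.leb 0 z); [pose proof (gp_pos b hbpos (Z.to_nat z)) | pose proof (gn_pos b hbpos (Z.to_nat (-z)))]; lra. Qed.

Lemma gg_rec b (hbpos : forall k, 0 < b k) j : gg b (j + 1)%Z = b (j + 1)%Z * gg b j.
Proof.
  unfold gg. destruct (Z.leb_spec 0 j).
  - destruct (Z.leb_spec 0 (j+1)); try lia.
    replace (Z.to_nat (j + 1)) with (S (Z.to_nat j)) by lia. simpl gp.
    f_equal. f_equal. lia.
  - destruct (Z.leb_spec 0 (j+1)).
    + assert (j = -1)%Z by lia. subst. simpl. pose proof (hbpos 0%Z). field. lra.
    + replace (Z.to_nat (- j)) with (S (Z.to_nat (- (j + 1)))) by lia. simpl gn.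
      replace (- Z.of_nat (Z.to_nat (- (j + 1))))%Z with (j + 1)%Z by lia.
      pose proof (hbpos (j+1)%Z). field. lra.
Qed.

Lemma T_adj a b n i : (forall k, 0 < b k) -> T a b n (i+1)%Z i = b (i+1)%Z * T a b n i (i+1)%Z.
Proof.
  intro hb. pose proof (T_sym a b (gg b) (gg_rec b hb) n i (i+1)%Z) as H.
  rewrite gg_rec in H by auto. pose proof (gg_nz b hb i).
  apply Rmult_eq_reg_r with (gg b i); auto. rewrite H. ring.
Qed.

Lemma part2u a b m eps : eps <> 0 -> (forall k, b k <> 0) ->
  E a b (ham (P2 eps) Vu (hdens m)) = INR (S m) * E a b (ham (P1 eps) Vu (hdens (S m))).
Proof.
  intros heps hb.
  hamcomp. rewrite !VarU, !VarV by auto. zsimpl.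
  rewrite (T_S a b m 0 1), (T_S_r a b m (-1) 0). zsimpl.
  rewrite fact_simpl, mult_INR. pose proof (INR_fact_neq_0 m).
  assert (INR (S m) <> 0) by (rewrite S_INR; pose proof (pos_INR m); lra).
  field. auto.
Qed.

Lemma part2v a b m eps : eps <> 0 -> (forall k, 0 < b k) ->
  E a b (ham (P2 eps) Vv (hdens m)) = INR (S m) * E a b (ham (P1 eps) Vv (hdens (S m))).
Proof.
  intros heps hbp. assert (hb : forall k, b k <> 0) by (intro k; specialize (hbp k); lra).
  hamcomp. rewrite !VarU, !VarV by auto. zsimpl.
  rewrite (T_S a b m 0 0), (T_S_r a b m (-1) (-1)). zsimpl.
  assert (H1 : T a b m 1 0 = b 1%Z * T a b m 0 1) by exact (T_adj a b m 0 hbp).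
  assert (H2 : T a b m (-1) (-2) = b (-1)%Z * T a b m (-2) (-1)) by exact (T_adj a b m (-2) hbp).
  rewrite H1, H2.
  rewrite fact_simpl, mult_INR. pose proof (INR_fact_neq_0 m).
  assert (INR (S m) <> 0) by (rewrite S_INR; pose proof (pos_INR m); lra).
  field. auto.
Qed.


Theorem mainTheorem9 (eps : R) (heps : 0 < eps) :
  (forall (j : nat) (u v : R -> R) (x : R),
      (forall k : Z, 1 - IZR k * eps * x <> 0) ->
      deval eps u v x (dop_coef 0 (lax_rhs j)) / eps
        = deval eps u v x (ham (P1 eps) Vu (hdens j)) /\
      deval eps u v x (dop_coef (-1) (lax_rhs j)) / (eps * exp (v x))
        = deval eps u v x (ham (P1 eps) Vv (hdens j)))
  /\
  (forall (n : nat) (w : field) (u v : R -> R) (x : R),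
      (1 <= n)%nat ->
      (forall k : Z, 1 - IZR k * eps * x <> 0) ->
      deval eps u v x (ham (P2 eps) w (hdens (n - 1)))
        = INR n * deval eps u v x (ham (P1 eps) w (hdens n))).
Proof.
  assert (heps' : eps <> 0) by lra.
  split.
  - intros j u v x _. rewrite !deval_E.
    assert (hbp : forall k, 0 < exp (v (lam_pt eps k x))) by (intro; apply exp_pos).
    assert (hb : forall k, exp (v (lam_pt eps k x)) <> 0) by (intro k; specialize (hbp k); lra).
    split.
    + apply part1a; auto.
    + replace (exp (v x)) with (exp (v (lam_pt eps 0 x))).
      * apply part1b; auto.
      * unfold lam_pt. f_equal. f_equal. simpl. field.
  - intros n w u v x Hn _. destruct n; [lia|]. replace (S n - 1)%nat with n by lia. rewrite !deval_E.
    assert (hbp : forall k, 0 < exp (v (lam_pt eps k x))) by (intro; apply exp_pos).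
    assert (hb : forall k, exp (v (lam_pt eps k x)) <> 0) by (intro k; specialize (hbp k); lra).
    destruct w; [apply part2u | apply part2v]; auto.
Qed.
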